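(* Let $\mathcal A$ be an $N\times N$ Hermitian matrix and, for $k=0,1,\dots,N-1$, let $\mathcal A^k$ be the matrix whose entries equal those of $\mathcal A$ on the $k$-th supra- and infra-diagonals (entries $(i,i+k)$ and $(i+k,i)$) and are zero elsewhere. Let $\psi\in\mathbb{C}^N$ be a normalized vector (not necessarily an eigenvector), and set $d_k=(\psi,\mathcal A^k\psi)$ and $\lambda=(\psi,\mathcal A\psi)=\sum_{k=0}^{N-1}d_k$. Let $M\le N$ be a positive integer. Then there exist an integer $n\in[0,N-M]$ and a normalized vector $\phi\in\mathbb{C}^N$ with $\phi_j=0$ unless $n+1\le j\le n+M$, such that $$(\phi,\mathcal A\phi)\le\lambda+\frac{C}{M^2}\sum_{k=1}^{M-1}k^2|d_k|+C\sum_{k=M}^{N-1}|d_k|,$$ where $C>0$ is a universal constant. *)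

(* Defs.v *)
(* Complex numbers are modelled as R[i] = complex R for R : realType
   (mathcomp-real-closed), vectors of C^N as column vectors 'cV[R[i]]_N. *)
From HB Require Import structures.
From mathcomp Require Import all_boot all_order all_algebra.
From mathcomp Require Import complex.
From mathcomp Require Import reals.
Set Implicit Arguments. Unset Strict Implicit. Unset Printing Implicit Defensive.
Import Order.TTheory GRing.Theory Num.Theory.
Local Open Scope ring_scope.

Definition cdot (C : numClosedFieldType) (N : nat) (u v : 'cV[C]_N) : C :=
  \sum_(i < N) (u i 0)^* * v i 0.

Definition is_hermitian (C : numClosedFieldType) (N : nat) (A : 'M[C]_N) : Prop :=
  forall i j : 'I_N, A j i = (A i j)^*.

Definition band (C : numClosedFieldType) (N : nat) (A : 'M[C]_N) (k : nat) : 'M[C]_N :=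
  \matrix_(i < N, j < N) (if (j == i + k :> nat)%N || (i == j + k :> nat)%N then A i j else 0).

(* phi is supported on the (0-based) indices n, ..., n+M-1,
   i.e. the 1-based indices n+1, ..., n+M. *)
Definition supported_in (C : numClosedFieldType) (N : nat) (phi : 'cV[C]_N) (n M : nat) : Prop :=
  forall j : 'I_N, ~~ ((n <= j) && (j < n + M))%N -> phi j 0 = 0.

(* Main.v *)
Require Import Defs.
From HB Require Import structures.
From mathcomp Require Import all_boot all_order all_algebra.
From mathcomp Require Import complex.
From mathcomp Require Import reals.
From mathcomp Require Import zify ring lra.
Import Order.TTheory GRing.Theory Num.Theory.
Local Open Scope ring_scope.

Definition chi (M t : nat) : nat := if (t < M)%N then minn t.+1 (M - t) else 0%N.
Definition ww (M s i : nat) : nat := if (s < i + M)%N then chi M (i + M - s.+1) else 0%N.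
Definition FF (M k : nat) : nat := (\sum_(0 <= t < M) chi M t * chi M (t + k))%N.

Lemma chi_lip1 M t k : (chi M (t + k) <= chi M t + k)%N.
Proof. rewrite /chi; case: ifP; case: ifP; lia. Qed.
Lemma chi_lip2 M t k : (chi M t <= chi M (t + k) + k)%N.
Proof. rewrite /chi; case: ifP; case: ifP; lia. Qed.
Lemma chi_big M t : (M <= t)%N -> chi M t = 0%N.
Proof. rewrite /chi; case: ifP; lia. Qed.
Lemma chi_le M t : (chi M t <= t.+1)%N.
Proof. rewrite /chi; case: ifP; lia. Qed.
Lemma chi_low M t : (t < M)%N -> (t.+1 * (M - t) <= M * chi M t)%N.
Proof. rewrite /chi => ->; rewrite /minn; case: ifP => h; nia. Qed.

Lemma ww_supp M s j : ww M s j <> 0%N -> (j <= s < j + M)%N.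
Proof. rewrite /ww /chi; repeat (case: ifP => ?); lia. Qed.

Lemma GG M N i j : (i <= j)%N -> (i <= N)%N ->
  (\sum_(0 <= s < N + M) ww M s i * ww M s j)%N = FF M (j - i).
Proof.
move=> hij hiN.
rewrite (big_cat_nat _ (n := i)) //=; last by lia.
rewrite big1_seq ?add0n; last first.
  move=> s; rewrite mem_index_iota => hs; rewrite /ww.
  have -> : (s < i + M)%N by lia.
  by rewrite chi_big //; lia.
rewrite (big_cat_nat _ (n := i + M)) //=; last by lia.
rewrite [X in (_ + X)%N]big1_seq ?addn0; last first.
  move=> s; rewrite mem_index_iota => hs; rewrite /ww.
  by have -> : (s < i + M)%N = false by lia.
rewrite (big_addn 0 (i + M) i) big_nat_rev /FF /=.
have -> : (i + M - i = M)%N by lia.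
apply: eq_big_nat => t ht.
rewrite /ww.
have -> : (0 + M - t.+1 + i < i + M)%N = true by lia.
have -> : (0 + M - t.+1 + i < j + M)%N = true by lia.
have -> : (i + M - (0 + M - t.+1 + i).+1 = t)%N by lia.
have -> : (j + M - (0 + M - t.+1 + i).+1 = t + (j - i))%N by lia.
by [].
lia.
Qed.

Lemma FF_big M k : (M <= k)%N -> FF M k = 0%N.
Proof.
move=> h; rewrite /FF big1_seq // => t; rewrite mem_index_iota => ht.
by rewrite (@chi_big M (t + k)%N) ?muln0 //; lia.
Qed.

Lemma FF_real (R : realFieldType) M k :
  (FF M k)%:R = \sum_(0 <= t < M) (chi M t)%:R * (chi M (t + k)%N)%:R :> R.
Proof. by rewrite /FF natr_sum; apply: eq_bigr => t _; rewrite natrM. Qed.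

Lemma shift_sq (R : realFieldType) M k : (k <= M)%N ->
  \sum_(0 <= t < M) (chi M (t + k)%N)%:R ^+ 2 + \sum_(0 <= t < k) (chi M t)%:R ^+ 2
  = \sum_(0 <= t < M) (chi M t)%:R ^+ 2 :> R.
Proof.
move=> hk.
have E : \sum_(k <= u < M + k) (chi M u)%:R ^+ 2 =
         \sum_(0 <= t < M) (chi M (t + k)%N)%:R ^+ 2 :> R.
  by rewrite (big_addn 0 (M + k) k) addnK.
rewrite -E (big_cat_nat _ (n := M)) //=; last by lia.
rewrite [X in _ + X + _]big1_seq ?addr0; last first.
  by move=> u; rewrite mem_index_iota => hu; rewrite chi_big ?expr0n //; lia.
by rewrite addrC -big_cat_nat.
Qed.

Lemma FF_diff (R : realFieldType) M k : (k <= M)%N ->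
  0 <= (FF M 0)%:R - (FF M k)%:R :> R /\
  (FF M 0)%:R - (FF M k)%:R <= M%:R * k%:R ^+ 2 :> R.
Proof.
move=> hk.
set x := fun t => (chi M t)%:R : R.
have id2 : 2 * ((FF M 0)%:R - (FF M k)%:R) =
   \sum_(0 <= t < M) (x (t + k)%N - x t) ^+ 2 + \sum_(0 <= t < k) x t ^+ 2.
  have := @shift_sq R M k hk; rewrite -/x => S.
  have e2 : \sum_(0 <= t < M) (x (t + k)%N - x t) ^+ 2 =
    \sum_(0 <= t < M) x (t + k)%N ^+ 2 + \sum_(0 <= t < M) x t ^+ 2
    - 2 * \sum_(0 <= t < M) x t * x (t + k)%N.
    rewrite mulr_sumr -big_split -sumrB /=; apply: eq_bigr => t _; ring.
  rewrite e2 !FF_real /x /=.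
  have -> : \sum_(0 <= t < M) (chi M t)%:R * (chi M (t + 0)%N)%:R = \sum_(0 <= t < M) ((chi M t)%:R ^+ 2 : R).
    by apply: eq_bigr => t _; rewrite addn0 expr2.
  lra.
have b1 : \sum_(0 <= t < M) (x (t + k)%N - x t) ^+ 2 <= M%:R * k%:R ^+ 2.
  have -> : M%:R * k%:R ^+ 2 = \sum_(0 <= t < M) (k%:R ^+ 2 : R).
    by rewrite sumr_const_nat subn0 mulr_natl.
  apply: ler_sum_nat => t _.
  have h1 := chi_lip1 M t k; have h2 := chi_lip2 M t k.
  have h1' : x (t + k)%N <= x t + k%:R by rewrite /x -natrD ler_nat.
  have h2' : x t <= x (t + k)%N + k%:R by rewrite /x -natrD ler_nat.
  nra.
have b2 : \sum_(0 <= t < k) x t ^+ 2 <= M%:R * k%:R ^+ 2.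
  apply: (le_trans (y := \sum_(0 <= t < k) (k%:R ^+ 2 : R))).
    apply: ler_sum_nat => t ht.
    have : (chi M t <= k)%N by have := chi_le M t; lia.
    rewrite -(ler_nat R) -/(x t) => h.
    have : 0 <= x t by rewrite /x ler0n.
    nra.
  rewrite sumr_const_nat subn0 mulr_natl -mulr_natl.
  have : (k%:R : R) <= M%:R by rewrite ler_nat.
  have : 0 <= (k%:R : R) ^+ 2 by rewrite exprn_ge0 ?ler0n.
  nra.
have p1 : 0 <= \sum_(0 <= t < M) (x (t + k)%N - x t) ^+ 2.
  by apply: sumr_ge0 => t _; rewrite sqr_ge0.
have p2 : 0 <= \sum_(0 <= t < k) x t ^+ 2.
  by apply: sumr_ge0 => t _; rewrite sqr_ge0.
split; lra.
Qed.

Lemma FF0_low (R : realFieldType) M : (0 < M)%N ->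
  (M%:R : R) ^+ 3 <= 36 * (FF M 0)%:R.
Proof.
move=> hM.
set x := fun t => (chi M t)%:R : R.
set m : R := M%:R.
have poly : forall n, 6 * \sum_(0 <= t < n) (t%:R + 1) * (m - t%:R) =
    3 * m * n%:R * (n%:R + 1) - 2 * (n%:R - 1) * n%:R * (n%:R + 1) :> R.
  elim=> [|n IH]; first by rewrite big_geq //; ring.
  rewrite big_nat_recr //= mulrDr IH -[n.+1]addn1 natrD; ring.
have s1 : \sum_(0 <= t < M) (t%:R + 1) * (m - t%:R) <= m * \sum_(0 <= t < M) x t.
  rewrite mulr_sumr ler_sum_nat // => t ht.
  have ht2 : (t < M)%N by lia.
  have := @chi_low M t ht2.
  rewrite -(ler_nat R) !natrM natrB; last by lia.
  by rewrite -/m -/(x t) natr1.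
have P' : 6 * \sum_(0 <= t < M) (t%:R + 1) * (m - t%:R) = m * (m + 1) * (m + 2).
  rewrite poly; ring.
have mpos : 1 <= m by rewrite /m ler1n.
have s2 : m * m / 6 <= \sum_(0 <= t < M) x t.
  have : m * (m * m / 6) <= m * \sum_(0 <= t < M) x t.
    apply: le_trans s1.
    have : 0 <= m * (3 * m + 2) by nra.
    lra.
  rewrite ler_pM2l //; lra.
have s3 : \sum_(0 <= t < M) (2 * (m / 6) * x t - (m / 6) ^+ 2)
          <= \sum_(0 <= t < M) x t ^+ 2.
  apply: ler_sum_nat => t _; rewrite -subr_ge0.
  have -> : x t ^+ 2 - (2 * (m / 6) * x t - (m / 6) ^+ 2) = (x t - m / 6) ^+ 2 by ring.
  exact: sqr_ge0.
have e3 : \sum_(0 <= t < M) (2 * (m / 6) * x t - (m / 6) ^+ 2) =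
   2 * (m / 6) * \sum_(0 <= t < M) x t - m * (m / 6) ^+ 2.
  rewrite sumrB -mulr_sumr.
  by rewrite sumr_const_nat subn0 -[(_ ^+ 2) *+ M]mulr_natl.
have -> : (FF M 0)%:R = \sum_(0 <= t < M) x t ^+ 2.
  by rewrite FF_real; apply: eq_bigr => t _; rewrite addn0 expr2.
rewrite e3 in s3.
have : m ^+ 3 / 18 <= 2 * (m / 6) * \sum_(0 <= t < M) x t.
  have -> : m ^+ 3 / 18 = 2 * (m / 6) * (m * m / 6) by field.
  rewrite ler_pM2l //; lra.
have e4 : m * (m / 6) ^+ 2 = m ^+ 3 / 36 by field.
lra.
Qed.

Set Implicit Arguments. Unset Strict Implicit. Unset Printing Implicit Defensive.

Definition TT (C : numClosedFieldType) N (A : 'M[C]_N) (psi : 'cV[C]_N) (i j : 'I_N) : C :=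
  (psi i 0)^* * (A i j * psi j 0).
Definition dist (i j : nat) : nat := if (i <= j)%N then (j - i)%N else (i - j)%N.

Lemma cdot_mul (C : numClosedFieldType) N (A : 'M[C]_N) u :
  cdot u (A *m u) = \sum_i \sum_j (u i 0)^* * (A i j * u j 0).
Proof. by rewrite /cdot; apply: eq_bigr => i _; rewrite mxE mulr_sumr. Qed.

Lemma key (C : numClosedFieldType) N (f : nat -> C) (i j : 'I_N) :
  \sum_(k < N) (if ((j == i + k :> nat) || (i == j + k :> nat))%N then f k else 0)
  = f (dist i j).
Proof.
have hi := ltn_ord i; have hj := ltn_ord j.
have hd : (dist i j < N)%N by rewrite /dist; case: ifP; lia.
rewrite (bigD1 (Ordinal hd)) //= big1 ?addr0.
  have -> : ((j == i + dist i j :> nat) || (i == j + dist i j :> nat))%N = true.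
    by rewrite /dist; case: ifP => h; apply/orP; [left|right]; apply/eqP; lia.
  by [].
move=> k hk.
have : (k : nat) != dist i j.
  by apply: contraNneq hk => h; apply/eqP; apply: val_inj.
rewrite /dist; case: ifP => h hk2; case: ifP => // /orP [] /eqP; lia.
Qed.

Lemma dsum (C : numClosedFieldType) N (A : 'M[C]_N) psi (f : nat -> C) :
  \sum_(k < N) f k * cdot psi (band A k *m psi)
  = \sum_(i < N) \sum_(j < N) f (dist i j) * TT A psi i j.
Proof.
under eq_bigr => k _ do rewrite cdot_mul mulr_sumr.
rewrite exchange_big; apply: eq_bigr => i _.
under eq_bigr => k _ do rewrite mulr_sumr.
rewrite exchange_big; apply: eq_bigr => j _.
rewrite -(key f i j) mulr_suml; apply: eq_bigr => k _.
rewrite /TT mxE; case: ifP => _; ring.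
Qed.

Lemma herm_real (C : numClosedFieldType) N (B : 'M[C]_N) v :
  is_hermitian B -> cdot v (B *m v) \is Num.real.
Proof.
move=> hB; rewrite CrealE; apply/eqP.
rewrite cdot_mul rmorph_sum /=.
under eq_bigr => i _ do rewrite rmorph_sum /=.
rewrite exchange_big; apply: eq_bigr => i _; apply: eq_bigr => j _.
rewrite !rmorphM /= conjCK (hB i j) conjCK.
by rewrite mulrCA [RHS]mulrCA [v j 0 * _]mulrC.
Qed.

Lemma band_herm (C : numClosedFieldType) N (A : 'M[C]_N) k :
  is_hermitian A -> is_hermitian (band A k).
Proof.
move=> hA i j; rewrite !mxE orbC; case: ifP => _; first exact: hA.
by rewrite conjC0.
Qed.

Definition phis (C : numClosedFieldType) N M (psi : 'cV[C]_N) (s : nat) : 'cV[C]_N :=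
  \col_(i < N) ((ww M s i)%:R * psi i 0).

Lemma GGo N M (i j : 'I_N) :
  (\sum_(s < N + M) ww M s i * ww M s j)%N = FF M (dist i j).
Proof.
rewrite -(big_mkord xpredT (fun s => ww M s i * ww M s j)%N) /dist.
have hi := ltn_ord i; have hj := ltn_ord j.
case: ifP => h; first by apply: GG => //; lia.
under eq_bigr => s _ do rewrite mulnC.
apply: GG; lia.
Qed.

Lemma a_sum (C : numClosedFieldType) N M (A : 'M[C]_N) psi :
  \sum_(s < N + M) cdot (phis M psi s) (A *m phis M psi s)
  = \sum_(i < N) \sum_(j < N) (FF M (dist i j))%:R * TT A psi i j.
Proof.
under eq_bigr => s _ do rewrite cdot_mul.
rewrite exchange_big; apply: eq_bigr => i _.
rewrite exchange_big; apply: eq_bigr => j _.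
rewrite -GGo natr_sum mulr_suml; apply: eq_bigr => s _.
rewrite /TT !mxE natrM rmorphM /= rmorph_nat; ring.
Qed.

Lemma b_sum (C : numClosedFieldType) N M (psi : 'cV[C]_N) :
  \sum_(s < N + M) cdot (phis M psi s) (phis M psi s)
  = (FF M 0)%:R * cdot psi psi.
Proof.
rewrite /cdot exchange_big mulr_sumr; apply: eq_bigr => i _.
have := GGo M i i; rewrite /dist leqnn subnn => <-.
rewrite natr_sum mulr_suml; apply: eq_bigr => s _.
rewrite !mxE natrM rmorphM /= rmorph_nat; ring.
Qed.

Lemma cdot_scaleA (C : numClosedFieldType) N (B : 'M[C]_N) a u :
  cdot (a *: u) (B *m (a *: u)) = a^* * a * cdot u (B *m u).
Proof.
rewrite /cdot mulr_sumr; apply: eq_bigr => i _.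
rewrite -scalemxAr !mxE rmorphM /=; ring.
Qed.

Lemma cdot_scale (C : numClosedFieldType) N a (u : 'cV[C]_N) :
  cdot (a *: u) (a *: u) = a^* * a * cdot u u.
Proof.
rewrite /cdot mulr_sumr; apply: eq_bigr => i _.
rewrite !mxE rmorphM /=; ring.
Qed.

Lemma select (R : realFieldType) K (al be : 'I_K -> R) F0 L :
  (forall s, 0 <= be s) -> (forall s, be s = 0 -> al s = 0) ->
  \sum_s be s = F0 -> 0 < F0 -> \sum_s al s = L ->
  exists s, 0 < be s /\ al s * F0 <= L * be s.
Proof.
move=> b0 bz sb F0p sa.
case: (boolP [exists s, (0 < be s) && (al s * F0 <= L * be s)]).
  by move=> /existsP [s /andP [h1 h2]]; exists s.
rewrite negb_exists => /forallP hn.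
have [s bs] : exists s, 0 < be s.
  case: (boolP [exists s, 0 < be s]); first by move=> /existsP.
  rewrite negb_exists => /forallP hb.
  have : \sum_s be s <= 0.
    apply: sumr_le0 => s _; have := hb s; rewrite -leNgt //.
  lra.
have gge : forall t, 0 <= al t * F0 - L * be t.
  move=> t; have := hn t; rewrite negb_and -!leNgt.
  case/orP => h.
    have : be t = 0 by apply/eqP; rewrite eq_le h b0.
    move=> e; rewrite e (bz t e); lra.
  lra.
have : 0 < \sum_t (al t * F0 - L * be t).
  rewrite (bigD1 s) //=.
  have : 0 < al s * F0 - L * be s.
    have := hn s; rewrite negb_and bs /= -ltNge; lra.
  have : 0 <= \sum_(t | t != s) (al t * F0 - L * be t) by apply: sumr_ge0.
  lra.
rewrite sumrB -mulr_suml -mulr_sumr sa sb; lra.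
Qed.

Lemma term1 (R : realFieldType) (F0 Fk m k r : R) :
  0 < m -> m ^+ 3 <= 36 * F0 -> 0 <= F0 - Fk -> F0 - Fk <= m * k ^+ 2 ->
  - (r - Fk * r / F0) <= 36 / m ^+ 2 * (k ^+ 2 * `|r|).
Proof.
move=> mp h36 d0 d1.
have F0p : 0 < F0.
  have : 0 < m ^+ 3 by apply: exprn_gt0.
  lra.
have e1 : - (r - Fk * r / F0) = (F0 - Fk) / F0 * (- r).
  by field; lra.
have e2 : (F0 - Fk) / F0 <= 36 / m ^+ 2 * k ^+ 2.
  rewrite ler_pdivrMr //.
  have -> : 36 / m ^+ 2 * k ^+ 2 * F0 = k ^+ 2 / m ^+ 2 * (36 * F0) by ring.
  apply: le_trans d1 _.
  have -> : m * k ^+ 2 = k ^+ 2 / m ^+ 2 * m ^+ 3 by field; lra.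
  apply: ler_wpM2l => //.
  apply: divr_ge0; [exact: sqr_ge0 | exact: sqr_ge0].
rewrite e1 mulrA.
apply: (@le_trans _ _ ((F0 - Fk) / F0 * `|r|)).

  apply: ler_wpM2l; first by apply: divr_ge0; lra.
  by rewrite -normrN ler_norm.
apply: ler_wpM2r => //.
Qed.

Lemma final_real (R : realFieldType) N M (r : nat -> R) :
  (0 < M)%N -> (M <= N)%N ->
  (\sum_(k < N) (FF M k)%:R * r k) / (FF M 0)%:R <=
  \sum_(k < N) r k + 36 / M%:R ^+ 2 * \sum_(1 <= k < M) (k%:R ^+ 2 * `|r k|)
  + 36 * \sum_(M <= k < N) `|r k|.
Proof.
move=> hM hMN.
set F0 : R := (FF M 0)%:R.
have h36 := @FF0_low R M hM; rewrite -/F0 in h36.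
have mp : 0 < (M%:R : R) by rewrite ltr0n.
have F0p : 0 < F0.
  have : 0 < (M%:R : R) ^+ 3 by apply: exprn_gt0.
  lra.
pose h k := r k - (FF M k)%:R * r k / F0.
have E : \sum_(k < N) r k - (\sum_(k < N) (FF M k)%:R * r k) / F0
         = \sum_(0 <= k < N) h k.
  rewrite big_mkord mulr_suml -sumrB; apply: eq_bigr => k _; by [].
have E2 : \sum_(0 <= k < N) h k = h 0%N + \sum_(1 <= k < M) h k + \sum_(M <= k < N) h k.
  rewrite big_ltn; last by lia.
  by rewrite (big_cat_nat _ (n := M)) //= addrA.
have h0 : h 0%N = 0 by rewrite /h -/F0; field; lra.
have B1 : - \sum_(1 <= k < M) h k <= 36 / M%:R ^+ 2 * \sum_(1 <= k < M) (k%:R ^+ 2 * `|r k|).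
  rewrite -sumrN mulr_sumr; apply: ler_sum_nat => k hk.
  have hk2 : (k <= M)%N by lia.
  have [d0 d1] := @FF_diff R M k hk2.
  exact: term1.
have B2 : - \sum_(M <= k < N) h k <= 36 * \sum_(M <= k < N) `|r k|.
  rewrite -sumrN mulr_sumr; apply: ler_sum_nat => k hk.
  rewrite /h FF_big; last by lia.
  rewrite mul0r mul0r subr0.
  have : - r k <= `|r k| by rewrite -normrN ler_norm.
  have : 0 <= `|r k| by [].
  lra.
lra.
Qed.

Unset Implicit Arguments.
Local Open Scope complex_scope.

Lemma realC (R : realType) (x : R) : (x%:C : R[i]) \is Num.real.
Proof. by apply/complex_realP; exists x. Qed.

Lemma cdot_ge0 (R : realType) N (u : 'cV[R[i]]_N) : 0 <= cdot u u.
Proof. by apply: sumr_ge0 => i _; rewrite mulrC mul_conjC_ge0. Qed.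

Lemma cdot_eq0 (R : realType) N (u : 'cV[R[i]]_N) : cdot u u = 0 -> u = 0.
Proof.
rewrite /cdot => h; apply/matrixP => i j; rewrite ord1 mxE.
have H : Num.conj (u i 0) * u i 0 = 0.
  by apply: (psumr_eq0P _ h) => // l _; rewrite mulrC mul_conjC_ge0.
by move/eqP: H; rewrite mulf_eq0 conjC_eq0 orbb => /eqP.
Qed.

Theorem theoremA1 (R : realType) :
  exists c : R, 0 < c /\
  forall (N : nat) (A : 'M[R[i]]_N) (psi : 'cV[R[i]]_N) (M : nat),
    is_hermitian A ->
    cdot psi psi = 1 ->
    (0 < M)%N -> (M <= N)%N ->
    let d := fun k : nat => cdot psi (band A k *m psi) in
    let lambda := cdot psi (A *m psi) in
    exists (n : nat) (phi : 'cV[R[i]]_N),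
      (n <= N - M)%N /\
      cdot phi phi = 1 /\
      supported_in phi n M /\
      cdot phi (A *m phi) <=
        lambda
        + (c%:C / (M%:R ^+ 2)) * \sum_(1 <= k < M) (k%:R ^+ 2) * `|d k|
        + c%:C * \sum_(M <= k < N) `|d k|.
Proof.
exists 36; split; first by rewrite ltr0n.
move=> N A psi M hA hpsi hM hMN d lambda.
have dreal k : d k \is Num.real by exact: herm_real (band_herm k hA).
pose r k := complex.Re (d k).
have dE k : d k = (r k)%:C by rewrite /r RRe_real.
have normE k : `|d k| = (`|r k|)%:C.
  by rewrite dE normc_def /= expr0n /= addr0 sqrtr_sqr.
have lamE : lambda = (\sum_(k < N) r k)%:C.
  rewrite rmorph_sum /=.
  transitivity (\sum_(k < N) 1 * cdot psi (band A k *m psi)); last first.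
    by apply: eq_bigr => k _; rewrite mul1r -dE.
  rewrite (dsum A psi (fun _ => 1)) /lambda cdot_mul.
  by apply: eq_bigr => i _; apply: eq_bigr => j _; rewrite mul1r.
have areal (s : nat) : cdot (phis M psi s) (A *m phis M psi s) \is Num.real.
  exact: herm_real.
have b0 (s : nat) : 0 <= cdot (phis M psi s) (phis M psi s) by exact: cdot_ge0.
pose al (s : 'I_(N + M)) := complex.Re (cdot (phis M psi s) (A *m phis M psi s)).
pose be (s : 'I_(N + M)) := complex.Re (cdot (phis M psi s) (phis M psi s)).
have aE (s : 'I_(N + M)) : cdot (phis M psi s) (A *m phis M psi s) = (al s)%:C.
  by rewrite /al RRe_real.
have bE (s : 'I_(N + M)) : cdot (phis M psi s) (phis M psi s) = (be s)%:C.
  by rewrite /be RRe_real // ger0_real.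
pose F0 : R := (FF M 0)%:R.
pose L : R := \sum_(k < N) (FF M k)%:R * r k.
have sb : \sum_s be s = F0.
  apply: complexI; rewrite rmorph_sum /=.
  transitivity (\sum_(s < N + M) cdot (phis M psi s) (phis M psi s)).
    by apply: eq_bigr => s _; rewrite bE.
  by rewrite b_sum hpsi mulr1 /F0 rmorph_nat.
have sa : \sum_s al s = L.
  apply: complexI; rewrite rmorph_sum /=.
  transitivity (\sum_(s < N + M) cdot (phis M psi s) (A *m phis M psi s)).
    by apply: eq_bigr => s _; rewrite aE.
  rewrite a_sum -(dsum A psi (fun k => (FF M k)%:R)) /L rmorph_sum /=.
  by apply: eq_bigr => k _; rewrite rmorphM /= rmorph_nat -dE.
have b0' s : 0 <= be s by rewrite -lecR -bE.
have bz s : be s = 0 -> al s = 0.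
  move=> h; have : cdot (phis M psi s) (phis M psi s) = 0 by rewrite bE h.
  move/cdot_eq0 => h0; rewrite /al h0 mulmx0.
  rewrite /cdot big1 // => i _; rewrite mxE mulr0 //.
have F0p : 0 < F0.
  have := @FF0_low R M hM; rewrite -/F0 => h.
  have : 0 < (M%:R : R) ^+ 3 by rewrite exprn_gt0 // ltr0n.
  lra.
have [s [bs hs]] := select b0' bz sb F0p sa.
pose q : R := (Num.sqrt (be s))^-1.
have qq : q * q * be s = 1.
  have bn : be s != 0 := lt0r_neq0 bs.
  by rewrite /q -expr2 exprVn sqr_sqrtr ?mulVf // ltW.
exists (minn (s + 1 - M) (N - M))%N, (q%:C *: phis M psi s).
split; first by rewrite geq_minr.
split.
  rewrite cdot_scale conj_Creal ?realC // bE.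
  by rewrite -!rmorphM /= qq.
split.
  move=> j hj; rewrite !mxE.
  have -> : ww M s j = 0%N; last by rewrite mul0r mulr0.
  apply/eqP; apply: contraNT hj => /eqP /ww_supp h.
  have hj2 := ltn_ord j; have hs2 := ltn_ord s.
  apply/andP; split; lia.
rewrite cdot_scaleA conj_Creal ?realC // aE -!rmorphM /=.
have RHSE : lambda + 36%:C / M%:R ^+ 2 * \sum_(1 <= k < M) k%:R ^+ 2 * `|d k| +
    36%:C * \sum_(M <= k < N) `|d k| =
    (\sum_(k < N) r k + 36 / M%:R ^+ 2 * \sum_(1 <= k < M) (k%:R ^+ 2 * `|r k|)
     + 36 * \sum_(M <= k < N) `|r k|)%:C.
  rewrite lamE !rmorphD !rmorphM /= fmorphV /= !rmorph_sum /= rmorphXn /= !rmorph_nat.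
  congr (_ + _ * _ + _ * _); apply: eq_bigr => k _.
    by rewrite rmorphM /= rmorphXn /= rmorph_nat normE.
  by rewrite normE.
rewrite RHSE lecR.
apply: le_trans (final_real r hM hMN).
have bn : be s != 0 := lt0r_neq0 bs.
have qq' : q * q = (be s)^-1 by apply: (mulIf bn); rewrite qq mulVf.
have -> : q * q * al s = al s / be s by rewrite qq' mulrC.
rewrite ler_pdivrMr // mulrAC ler_pdivlMr //.
Qed.
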